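(* Let $\Gamma$ be a distance-regular graph with diameter $3$, $n$ vertices and eigenvalues $k>\theta_1>\theta_2>\theta_3$, and let $m_1$ be the multiplicity of $\theta_1$. If $n\geq \frac{(m_1+2)(m_1+1)}{2}$, then $q^2_{11}=0$ or $q^3_{11}=0$, and hence $\Gamma$ is $Q$-polynomial with respect to $\theta_1$.
   Context: A connected graph $\Gamma$ of diameter $D$ is distance-regular if there are integers $b_i,c_i$ ($0\le i\le D$) such that for any two vertices $x,y$ at distance $i$, exactly $c_i$ neighbours of $y$ are at distance $i-1$ from $x$ and exactly $b_i$ neighbours of $y$ are at distance $i+1$ from $x$. Its eigenvalues (of the adjacency matrix) are $k=\theta_0>\theta_1>\dots>\theta_D$. Let $E_i$ be the orthogonal projection onto the eigenspace of $\theta_i$ (so $E_0=\frac1nJ$). The Krein parameters $q^h_{ij}$ are defined by $E_i\circ E_j=\frac1n\sum_{h=0}^D q^h_{ij}E_h$, where $\circ$ is the entrywise product. $\Gamma$ is $Q$-polynomial with respect to $\theta_1$ if there is an ordering $E_0,E_1,F_2,\dots,F_D$ of the primitive idempotents, beginning with $E_0$ and the projection $E_1$ for $\theta_1$, such that in this ordering the Krein parameter $q^{h}_{1j}$ vanishes whenever the positions $j,h$ satisfy $|j-h|>1$. *)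

(* Defs.v *)
From HB Require Import structures.
From mathcomp Require Import all_boot all_order all_algebra.
From mathcomp Require Import reals.
Set Implicit Arguments. Unset Strict Implicit. Unset Printing Implicit Defensive.
Import Order.TTheory GRing.Theory Num.Theory.
Local Open Scope ring_scope.

Section Graphs.
Variable n : nat.
Implicit Types adj : rel 'I_n.

Fixpoint walk adj (k : nat) (x y : 'I_n) : bool :=
  match k with
  | 0 => x == y
  | k'.+1 => [exists z, adj x z && walk adj k' z y]
  end.

Definition connected_graph adj := forall x y, exists k, walk adj k x y.

(* graph distance: least k with a walk of length k (meaningful when connected,
   since then a walk of length < n exists) *)
Definition dist adj (x y : 'I_n) : nat :=
  find (fun k => walk adj k x y) (iota 0 n).

Definition diameter_is adj (D : nat) :=
  (forall x y, (dist adj x y <= D)%N) /\ exists x y, dist adj x y = D.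

Definition distance_regular adj :=
  connected_graph adj /\
  exists b c : nat -> nat, forall x y : 'I_n,
    (#|[set z | adj y z & dist adj x z == (dist adj x y).+1]| = b (dist adj x y))%N /\
    ((0 < dist adj x y)%N ->
     #|[set z | adj y z & dist adj x z == (dist adj x y).-1]| = c (dist adj x y))%N.

Definition adjmx (R : nzRingType) adj : 'M[R]_n := \matrix_(i, j) (adj i j)%:R.

Definition is_orth_proj (R : fieldType) (A : 'M[R]_n) (th : R) (E : 'M[R]_n) :=
  E^T = E /\ E *m E = E /\ (E == eigenspace A th)%MS.

Definition hadamard (R : nzRingType) (E F : 'M[R]_n) : 'M[R]_n :=
  \matrix_(i, j) (E i j * F i j).
End Graphs.

(* Q-polynomiality w.r.t. E_1, given Krein parameters q i j h = q^h_{ij}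
   (indices 0..D): an ordering E_0, E_1, F_2, ..., F_D (sigma a permutation of
   {0..D} fixing 0 and 1) with q^{sigma h}_{1 (sigma j)} = 0 whenever |j-h|>1. *)
Definition Q_polynomial_wrt1 (R : nzRingType) (D : nat) (q : nat -> nat -> nat -> R) :=
  exists sigma : nat -> nat,
    [/\ sigma 0 = 0%N, sigma 1 = 1%N,
        perm_eq (map sigma (iota 0 D.+1)) (iota 0 D.+1) &
        forall j h, (j <= D)%N -> (h <= D)%N -> (j.+1 < h \/ h.+1 < j)%N ->
          q 1%N (sigma j) (sigma h) = 0].

(* Main.v *)
Require Import Defs.
From HB Require Import structures.
From mathcomp Require Import all_boot all_order all_algebra.
From mathcomp Require Import reals.
From mathcomp.real_closed Require Import complex.
From mathcomp Require Import ring zify.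
Import Order.TTheory GRing.Theory Num.Theory.
Local Open Scope ring_scope.
Lemma real_sym_split (R : realType) n (A : 'M[R]_n.+1) (th : nat -> R) :
  A^T = A -> (forall a, eigenvalue A a -> exists2 i, (i < 4)%N & a = th i) ->
  horner_mx A (\prod_(i < 4) ('X - (th i)%:P)) = 0.
Proof.
move=> Asym Aev.
pose toC : {rmorphism R -> R[i]} := real_complex R.
pose Ac := map_mx toC A.
have Ach : Ac \is hermsymmx.
  apply: realsym_hermsym.
    by apply/is_hermitianmxP; rewrite expr0 scale1r map_mx_id // /Ac map_trmx Asym.
  by apply/mxOverP => i j; rewrite mxE; apply/complex_realP; exists (A i j).
have /orthomx_spectralP AcE := hermitian_normalmx Ach.
have dreal := hermitian_spectral_diag_real Ach.
set P := spectralmx Ac in AcE; set d := spectral_diag Ac in AcE dreal.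
have Punit : P \in unitmx := spectral_unit Ac.
apply: (@map_mx_inj _ _ toC).
rewrite map_mx0 map_horner_mx -/Ac AcE horner_mx_uconjC // horner_mx_diag.
suff -> : map_mx (horner (map_poly toC (\prod_(i < 4) ('X - (th i)%:P)))) d = 0.
  by rewrite (_ : diag_mx 0 = 0) ?mulmx0 ?mul0mx //; apply/matrixP=> a b; rewrite !mxE mul0rn.
apply/matrixP => i j; rewrite !mxE.
have [k dk] : exists k, d 0 j = toC k.
  by apply/complex_realP; move/mxOverP: dreal; apply.
have : eigenvalue A k.
  rewrite eigenvalue_root_char -(fmorph_root toC) map_char_poly -/Ac -dk.
  rewrite -eigenvalue_root_char; apply/eigenvalueP.
  exists (row j P).
    rewrite {1}AcE !mulmxA rowE mulmxK //.
    by rewrite -!rowE row_diag_mx -scalemxAl -rowE.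
  rewrite rowE mulmx_free_eq0 ?row_free_unit //.
  by apply/eqP => /matrixP /(_ 0 j); rewrite !mxE !eqxx /= => /eqP; rewrite oner_eq0.
move=> /Aev [l l4 kE].
rewrite (ord1 i) dk kE rmorph_prod horner_prod (bigD1 (Ordinal l4)) //=.
by rewrite map_polyXsubC hornerXsubC subrr mul0r.
Qed.
Lemma rank_addmx (F : fieldType) m n (A B : 'M[F]_(m, n)) :
  (\rank (A + B)%R <= \rank A + \rank B)%N.
Proof.
apply: leq_trans (mxrankS (addmx_sub_adds (submx_refl A) (submx_refl B))) _.
exact: mxrank_adds_leqif.
Qed.

Arguments rank_addmx {F m n}.

Lemma rank_summx (F : fieldType) m n (I : Type) (r : seq I) (P : pred I)
   (B : I -> 'M[F]_(m, n)) :
  (\rank (\sum_(i <- r | P i) B i)%R <= \sum_(i <- r | P i) \rank (B i))%N.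
Proof.
elim: r => [|i r IH]; first by rewrite !big_nil mxrank0.
rewrite !big_cons; case: (P i) => //.
apply: (leq_trans (rank_addmx _ _)). by rewrite leq_add2l.
Qed.

Arguments rank_summx {F m n I}.

Lemma sq_sum_tri (R : comNzRingType) r (f : 'I_r -> R) :
  (\sum_a f a) * (\sum_a f a) =
  \sum_(b < r) \sum_(a < r | (a <= b)%N) ((if a == b then 1 else 2%:R) * (f a * f b)).
Proof.
rewrite mulr_suml.
have -> : \sum_a f a * \sum_a0 f a0 = \sum_b \sum_a f a * f b.
  rewrite exchange_big /=; apply: eq_bigr => a _; by rewrite mulr_sumr.
have E1 (b : 'I_r) : \sum_(a < r | (a <= b)%N) ((if a == b then 1 else 2%:R) * (f a * f b))
   = f b * f b + \sum_(a < r | (a < b)%N) (2%:R * (f a * f b)).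
  rewrite (bigD1 b) //= eqxx mul1r; congr (_ + _).
  apply: eq_big => [a|a /andP[_ /negPf ->]//].
  by rewrite ltn_neqAle andbC.
have E2 (b : 'I_r) : \sum_a f a * f b = f b * f b + \sum_(a < r | (a < b)%N) (f a * f b)
      + \sum_(a < r | (b < a)%N) (f a * f b).
  rewrite (bigD1 b) //= -addrA; congr (_ + _).
  rewrite (bigID (fun a : 'I_r => (a < b)%N)) /=; congr (_ + _); apply: eq_bigl => a.
    by rewrite -(inj_eq val_inj) /=; case: ltngtP.
  by rewrite -(inj_eq val_inj) /=; case: ltngtP.
rewrite (eq_bigr _ (fun b _ => E2 b)) (eq_bigr _ (fun b _ => E1 b)) !big_split /=.
rewrite -addrA; congr (_ + _).
have -> : \sum_(b < r) \sum_(a < r | (b < a)%N) (f a * f b) =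
          \sum_(b < r) \sum_(a < r | (a < b)%N) (f a * f b).
  rewrite (exchange_big_dep predT) //=.
  apply: eq_bigr => b _; apply: eq_big => // a _; exact: mulrC.
rewrite -big_split /=; apply: eq_bigr => b _; rewrite -big_split /=.
by apply: eq_bigr => a _; rewrite mulr2n mulrDl mul1r.
Qed.


Lemma count_le (r : nat) (b : 'I_r) : (\sum_(a < r | (a <= b)%N) 1 = b.+1)%N.
Proof.
transitivity (\sum_(0 <= a < r | true && (a < b.+1)%N) 1)%N.
  by rewrite big_mkord.
by rewrite -big_nat_widen ?ltn_ord // sum_nat_const_nat subn0 muln1.
Qed.

Lemma tri_sum r : (2 * \sum_(b < r) b.+1 = r * r.+1)%N.
Proof.
elim: r => [|r IH]; first by rewrite big_ord0.
rewrite big_ord_recr /= mulnDr IH; lia.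
Qed.

Lemma hadamard_rank (R : fieldType) n (X : 'M[R]_n) :
  (2 * \rank (hadamard X X) <= \rank X * (\rank X).+1)%N.
Proof.
set r := \rank X.
pose U : 'M_(n, r) := col_base X.
pose V : 'M_(r, n) := row_base X.
have XE : X = U *m V by rewrite mulmx_base.
pose u (a b : 'I_r) : 'cV[R]_n := \col_i (U i a * U i b).
pose v (a b : 'I_r) : 'rV[R]_n := \row_j (V a j * V b j).
have HE : hadamard X X = \sum_(b < r) \sum_(a < r | (a <= b)%N)
    ((if a == b then 1 else 2%:R) *: (u a b *m v a b)).
  apply/matrixP => i j; rewrite /hadamard mxE XE !mxE.
  rewrite (@sq_sum_tri _ _ (fun a => U i a * V a j)) summxE; apply: eq_bigr => b _.
  rewrite summxE; apply: eq_bigr => a _; by rewrite !mxE big_ord1 !mxE mulrACA.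
rewrite HE -tri_sum leq_mul2l /=.
apply: leq_trans (rank_summx _ _ _) _; apply: leq_sum => b _.
apply: leq_trans (rank_summx _ _ _) _; rewrite -count_le; apply: leq_sum => a _.
apply: leq_trans (mxrank_scale _ _) _.
apply: leq_trans (mxrankM_maxr _ _) _.
exact: rank_leq_row.
Qed.
Lemma find_iota0 (P : pred nat) m : (0 < m)%N -> P 0%N -> find P (iota 0 m) = 0%N.
Proof. by case: m => //= m _ ->. Qed.

Lemma find_iota1 (P : pred nat) m : (1 < m)%N -> ~~ P 0%N -> P 1%N ->
  find P (iota 0 m) = 1%N.
Proof. by case: m => [|[|m]] //= _ /negPf -> ->. Qed.

Definition Bf {R : nzRingType} {n} (X Y : 'M[R]_n) := \tr (X *m Y^T).

Lemma BfE (R : comNzRingType) n (X Y : 'M[R]_n) :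
  Bf X Y = \sum_x \sum_y X x y * Y x y.
Proof.
by rewrite /Bf /mxtrace; apply: eq_bigr => x _; rewrite mxE; apply: eq_bigr => y _; rewrite mxE.
Qed.

Lemma BfZ (R : comNzRingType) n (a : R) (X Y : 'M[R]_n) : Bf (a *: X) Y = a * Bf X Y.
Proof. by rewrite /Bf -scalemxAl mxtraceZ. Qed.

Lemma Bf_sum (R : comNzRingType) n (I : Type) (r : seq I) (F : I -> 'M[R]_n) Y :
  Bf (\sum_(i <- r) F i) Y = \sum_(i <- r) Bf (F i) Y.
Proof. by rewrite /Bf mulmx_suml linear_sum. Qed.

Lemma Bf_had_swap (R : comNzRingType) n (X Y Z : 'M[R]_n) :
  Bf (hadamard X Y) Z = Bf (hadamard X Z) Y.
Proof.
rewrite !BfE; apply: eq_bigr => x _; apply: eq_bigr => y _.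
by rewrite !mxE mulrAC.
Qed.

Lemma Bf_had1 (R : comNzRingType) n (X Y : 'M[R]_n) :
  Bf (hadamard X Y) (const_mx 1) = Bf X Y.
Proof.
rewrite !BfE; apply: eq_bigr => x _; apply: eq_bigr => y _.
by rewrite !mxE mulr1.
Qed.

Lemma mul_self_ge0 (R : realDomainType) (x : R) : 0 <= x * x.
Proof. by rewrite -expr2 sqr_ge0. Qed.

Lemma Bf_self_neq0 (R : realType) n (X : 'M[R]_n) : X != 0 -> Bf X X != 0.
Proof.
move=> Xn0; rewrite BfE; apply: contra Xn0 => /eqP H.
apply/eqP/matrixP => x y; rewrite mxE.
have H1 := psumr_eq0P (fun x _ => sumr_ge0 _ (fun y _ => mul_self_ge0 _ (X x y))) H.
have := psumr_eq0P (fun y _ => mul_self_ge0 _ (X x y)) (H1 x isT) (i := y) isT.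
by move/eqP; rewrite mulf_eq0 orbb => /eqP.
Qed.

Section Main.
Variables (R : realType) (n : nat) (adj : rel 'I_n) (th : nat -> R)
  (E : nat -> 'M[R]_n) (q : nat -> nat -> nat -> R).
Local Notation A := (adjmx R adj).
Hypotheses (adj_sym : symmetric adj) (adj_irr : irreflexive adj)
  (drg : distance_regular adj)
  (th_dec : forall i j, (i < j)%N -> (j < 4)%N -> th j < th i)
  (ev : forall a, eigenvalue A a <-> exists2 i, (i < 4)%N & a = th i)
  (proj : forall i, (i < 4)%N -> is_orth_proj A (th i) (E i))
  (krein : forall i j, (i < 4)%N -> (j < 4)%N ->
     hadamard (E i) (E j) = n%:R^-1 *: \sum_(h < 4) q i j h *: E h).

Lemma Asym : A^T = A.
Proof. by apply/matrixP => i j; rewrite !mxE adj_sym. Qed.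

Lemma Esym h : (h < 4)%N -> (E h)^T = E h.
Proof. by move=> /proj []. Qed.

Lemma Eidem h : (h < 4)%N -> E h *m E h = E h.
Proof. by move=> /proj [_ []]. Qed.

Lemma Esub h : (h < 4)%N -> (E h <= eigenspace A (th h))%MS.
Proof. by move=> /proj [_ [_ /andP[]]]. Qed.

Lemma Esup h : (h < 4)%N -> (eigenspace A (th h) <= E h)%MS.
Proof. by move=> /proj [_ [_ /andP[]]]. Qed.

Lemma EA h : (h < 4)%N -> E h *m A = th h *: E h.
Proof. by move=> /Esub /eigenspaceP. Qed.

Lemma AE h : (h < 4)%N -> A *m E h = th h *: E h.
Proof.
move=> h4; apply: trmx_inj.
by rewrite trmx_mul Asym Esym // EA // linearZ /= Esym.
Qed.

Lemma th_neq h g : (h < 4)%N -> (g < 4)%N -> h != g -> th h != th g.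
Proof.
move=> h4 g4; case: ltngtP => // [hg|gh] _.
  by rewrite gt_eqF // th_dec.
by rewrite lt_eqF // th_dec.
Qed.

Lemma EE h g : (h < 4)%N -> (g < 4)%N -> h != g -> E h *m E g = 0.
Proof.
move=> h4 g4 hg.
have : (th h - th g) *: (E h *m E g) = 0.
  rewrite scalerBl scalemxAl -EA // scalemxAr -AE // mulmxA subrr //.
by move/eqP; rewrite scaler_eq0 subr_eq0 (negPf (@th_neq h g h4 g4 hg)) /= => /eqP.
Qed.

Lemma E_neq0 h : (h < 4)%N -> E h != 0.
Proof.
move=> h4; have /ev : exists2 i, (i < 4)%N & th h = th i by exists h.
rewrite /eigenvalue; apply: contraNneq => Eh0.
by rewrite -submx0 -Eh0 Esup.
Qed.

Lemma Emv m (v : 'M_(m, n)) h : (h < 4)%N -> (v <= E h)%MS -> v *m E h = v.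
Proof. by move=> h4 /submxP [w ->]; rewrite -mulmxA Eidem. Qed.

Lemma EG h : (h < 4)%N -> E h *m \sum_(g < 4) E g = E h.
Proof.
move=> h4; rewrite mulmx_sumr (bigD1 (Ordinal h4)) //= Eidem // big1 ?addr0 //.
move=> g; rewrite -(inj_eq val_inj) /= eq_sym => hg; exact: EE.
Qed.

Lemma eig_span : (1%:M <= \sum_(i < 4) eigenspace A (th i))%MS.
Proof.
move: A Asym (fun a => (ev a).1).
case: (n) => [|m] B Bsym Bev; first by rewrite thinmx0 sub0mx.
have := @real_sym_split R m B th Bsym Bev.
move/mxminpoly_min/kermxpoly_min => Hk.
have Hp := @kermxpoly_prod R m.+1 B _ predT (fun i : 'I_4 => 'X - (th i)%:P).
rewrite -Hk Hp.
  by apply/sumsmx_subP => i _; rewrite (sumsmx_sup i) // eigenspace_poly.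
move=> i j _ _ ji; apply: coprimep_XsubC2; rewrite subr_eq0.
by apply: th_neq => //; rewrite (inj_eq val_inj).
Qed.

Lemma Gsum : \sum_(g < 4) E g = 1%:M.
Proof.
apply/row_matrixP => x.
have vsub : (row x 1%:M <= \sum_(g < 4) E g)%MS.
  apply: submx_trans (submx1 _) _; apply: submx_trans eig_span _.
  by apply: sumsmxS => i _; apply: Esup.
have [u uE] := sub_sumsmxP vsub.
rewrite -[X in row x X]mul1mx row_mul {1}uE mulmx_suml [RHS]uE.
apply: eq_bigr => i _; by rewrite -mulmxA EG.
Qed.

Lemma dist0 y : dist adj y y = 0%N.
Proof. by rewrite /dist find_iota0 //= (leq_ltn_trans _ (ltn_ord y)). Qed.

Lemma dist1 y z : adj y z -> dist adj y z = 1%N.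
Proof.
move=> ayz; have yz : y != z by apply: contraTneq ayz => ->; rewrite adj_irr.
rewrite /dist find_iota1 //=.
- case: (ltngtP y z) yz => [yz|zy|/val_inj ->]; last by rewrite eqxx.
  + by move=> _; apply: leq_ltn_trans (ltn_ord z); apply: leq_ltn_trans yz.
  + by move=> _; apply: leq_ltn_trans (ltn_ord y); apply: leq_ltn_trans zy.
- by apply/existsP; exists z; rewrite ayz eqxx.
Qed.

Lemma regular : exists k : nat, forall y, #|[set z | adj y z]| = k.
Proof.
case: drg => _ [b [c H]]; exists (b 0%N) => y.
have [+ _] := H y y; rewrite dist0 => <-.
apply: eq_card => z; rewrite !inE.
by case ayz: (adj y z) => //=; rewrite dist1.
Qed.

Hypothesis n_gt0 : (0 < n)%N.

Lemma A_ge0 y z : 0 <= A y z.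
Proof. by rewrite mxE ler0n. Qed.

Lemma rowsum : forall y, \sum_z A y z = th 0.
Proof.
have [k Hk] := regular.
have rs : forall y, \sum_z A y z = k%:R.
  move=> y; rewrite -(Hk y) -sum1_card natr_sum [RHS]big_mkcond /=.
  by apply: eq_bigr => z _; rewrite !mxE inE; case: (adj y z).
have cs : forall z, \sum_y A y z = k%:R.
  by move=> z; rewrite -(rs z); apply: eq_bigr => y _; rewrite !mxE adj_sym.
have kev : eigenvalue A k%:R.
  apply/eigenvalueP; exists (const_mx 1).
    apply/rowP => y; rewrite !mxE.
    under eq_bigr do rewrite mxE mul1r.
    by rewrite cs mulr1.
  by apply/eqP => /rowP /(_ (Ordinal n_gt0)); rewrite !mxE => /eqP; rewrite oner_eq0.
have [i i4 ki] := (ev _).1 kev.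
have th0k : th 0 <= k%:R.
  have /ev : exists2 i, (i < 4)%N & th 0 = th i by exists 0%N.
  move=> /eigenvalueP [w wE wn0].
  case: (@arg_maxP _ _ _ (Ordinal n_gt0) predT (fun x => `|w 0 x|) isT) => x _ xmax.
  have wAx : (w *m A) 0 x = th 0 * w 0 x by rewrite wE mxE.
  have key : `|th 0| * `|w 0 x| <= k%:R * `|w 0 x|.
    rewrite -normrM -wAx mxE (le_trans (ler_norm_sum _ _ _)) //.
    rewrite -(cs x) mulr_suml; apply: ler_sum => z _.
    rewrite normrM (ger0_norm (A_ge0 _ _)) mulrC ler_wpM2l ?A_ge0 //; exact: xmax.
  have wx0 : 0 < `|w 0 x|.
    rewrite normr_gt0; apply: contraNneq wn0 => wx; apply/eqP/rowP => z.
    rewrite mxE; apply/eqP; rewrite -normr_eq0 eq_le normr_ge0 andbT.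
    by have := xmax z isT; rewrite wx normr0.
  by rewrite (le_trans (ler_norm _)) // -(ler_pM2r wx0).
suff kth : (k%:R : R) = th 0 by move=> y; rewrite rs kth.
case: i i4 ki => [|i] i4 ki; first by rewrite ki.
have := @th_dec 0 i.+1 (ltn0Sn i) i4; rewrite -ki => H; have := lt_le_trans H th0k.
by rewrite ltxx.
Qed.

Local Notation c := (const_mx 1 : 'cV[R]_n).

Lemma Ac : A *m c = th 0 *: c.
Proof.
apply/colP => y; rewrite !mxE -(rowsum y) mulr1.
by apply: eq_bigr => z _; rewrite !mxE mulr1.
Qed.

Lemma Ec h : (h < 4)%N -> h != 0%N -> E h *m c = 0.
Proof.
move=> h4 h0.
have : (th h - th 0) *: (E h *m c) = 0.
  by rewrite scalerBl scalemxAl -EA // -mulmxA Ac scalemxAr subrr.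
by move/eqP; rewrite scaler_eq0 subr_eq0 (negPf (@th_neq h 0 h4 isT h0)) /= => /eqP.
Qed.

Lemma E0c : E 0 *m c = c.
Proof.
have cs : (c^T <= E 0)%MS.
  apply: (submx_trans _ (@Esup 0%N isT)); apply/eigenspaceP.
  by rewrite -{1}Asym -trmx_mul Ac linearZ.
apply: trmx_inj; by rewrite trmx_mul Esym // Emv.
Qed.

Lemma BfJ h : (h < 4)%N -> Bf (E h) (const_mx 1) = if h == 0%N then n%:R else 0.
Proof.
move=> h4; rewrite BfE.
have -> : \sum_x \sum_y E h x y * (const_mx 1 : 'M[R]_n) x y = \sum_x (E h *m c) x 0.
  by apply: eq_bigr => x _; rewrite mxE; apply: eq_bigr => y _; rewrite !mxE.
case: eqP => [->|/eqP h0]; last by rewrite Ec // big1 // => x _; rewrite mxE.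
rewrite E0c; under eq_bigr do rewrite mxE.
by rewrite sumr_const card_ord.
Qed.

Lemma BfEE g h : (g < 4)%N -> (h < 4)%N -> g != h -> Bf (E g) (E h) = 0.
Proof. by move=> g4 h4 gh; rewrite /Bf Esym // EE // mxtrace0. Qed.

Lemma Bf_krein i j Y : (i < 4)%N -> (j < 4)%N ->
  Bf (hadamard (E i) (E j)) Y = n%:R^-1 * \sum_(g < 4) q i j g * Bf (E g) Y.
Proof.
move=> i4 j4; rewrite krein // BfZ Bf_sum; congr (_ * _).
by apply: eq_bigr => g _; rewrite BfZ.
Qed.

Lemma Bf_krein_E i j h : (i < 4)%N -> (j < 4)%N -> (h < 4)%N ->
  Bf (hadamard (E i) (E j)) (E h) = n%:R^-1 * (q i j h * Bf (E h) (E h)).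
Proof.
move=> i4 j4 h4; rewrite Bf_krein //; congr (_ * _).
rewrite (bigD1 (Ordinal h4)) //= big1 ?addr0 // => g.
rewrite -(inj_eq val_inj) /= => gh; rewrite BfEE ?mulr0 //.
Qed.

Lemma n_neq0 : (n%:R : R) != 0.
Proof. by rewrite pnatr_eq0 -lt0n. Qed.

Lemma q_0 j : (j < 4)%N -> q 1 j 0 = Bf (E 1) (E j).
Proof.
move=> j4; rewrite -(@Bf_had1 _ _ (E 1) (E j)) Bf_krein //.
rewrite (bigD1 ord0) //= big1 ?addr0.
  by rewrite BfJ // mulrC mulfK // n_neq0.
move=> g; rewrite -(inj_eq val_inj) /= => g0; rewrite BfJ ?ltn_ord //.
by rewrite (negPf g0) mulr0.
Qed.

Lemma Bhh_neq0 h : (h < 4)%N -> Bf (E h) (E h) != 0.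
Proof. by move=> h4; apply: Bf_self_neq0; apply: E_neq0. Qed.

Lemma q1j0 j : (j < 4)%N -> j != 1%N -> q 1 j 0 = 0.
Proof. by move=> j4 j1; rewrite q_0 // BfEE // eq_sym. Qed.

Lemma q110_neq0 : q 1 1 0 != 0.
Proof. by rewrite q_0 // Bhh_neq0. Qed.

Lemma q_swap a b : (a < 4)%N -> (b < 4)%N ->
  q 1 a b * Bf (E b) (E b) = q 1 b a * Bf (E a) (E a).
Proof.
move=> a4 b4; have := @Bf_had_swap _ _ (E 1) (E a) (E b).
rewrite !Bf_krein_E //; apply: mulfI; by rewrite invr_eq0 n_neq0.
Qed.

Lemma q10h h : (h < 4)%N -> h != 1%N -> q 1 0 h = 0.
Proof.
move=> h4 h1; have := @q_swap 0 h isT h4; rewrite q1j0 // mul0r.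
by move/eqP; rewrite mulf_eq0 (negPf (@Bhh_neq0 h h4)) orbF => /eqP.
Qed.

Lemma q1h1 h : (h < 4)%N -> q 1 1 h = 0 -> q 1 h 1 = 0.
Proof.
move=> h4 qh; have := @q_swap h 1 h4 isT; rewrite qh mul0r.
by move/eqP; rewrite mulf_eq0 (negPf (@Bhh_neq0 1 isT)) orbF => /eqP.
Qed.

Lemma ME g : (g < 4)%N ->
  hadamard (E 1) (E 1) *m E g = (n%:R^-1 * q 1 1 g) *: E g.
Proof.
move=> g4; rewrite krein // -scalemxAl mulmx_suml (bigD1 (Ordinal g4)) //=.
rewrite big1 ?addr0; first by rewrite -scalemxAl Eidem // scalerA.
move=> h; rewrite -(inj_eq val_inj) /= => hg; by rewrite -scalemxAl EE // scaler0.
Qed.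

Lemma Mkey g : (g < 4)%N -> q 1 1 g != 0 ->
  hadamard (E 1) (E 1) *m ((n%:R * (q 1 1 g)^-1) *: E g) = E g.
Proof.
move=> g4 qg; rewrite -scalemxAr ME // scalerA.
have -> : n%:R * (q 1 1 g)^-1 * (n%:R^-1 * q 1 1 g) = 1.
  by field; rewrite qg n_neq0.
by rewrite scale1r.
Qed.

Theorem main_sec :
  ((\rank (eigenspace A (th 1%N)) + 2) * (\rank (eigenspace A (th 1%N)) + 1) <= 2 * n)%N ->
  q 1 1 2 = 0 \/ q 1 1 3 = 0.
Proof.
move=> hm.
case: (eqVneq (q 1 1 2) 0) => [->|q2]; first by left.
case: (eqVneq (q 1 1 3) 0) => [->|q3]; first by right.
exfalso.
have m1E : \rank (E 1) = \rank (eigenspace A (th 1%N)).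
  by apply: eqmx_rank; case: (@proj 1 isT) => _ [_ ->].
set m1 := \rank (eigenspace A (th 1%N)) in hm m1E.
set M := hadamard (E 1) (E 1).
pose F := E 0 + E 2 + E 3.
have MF : M *m ((n%:R * (q 1 1 0)^-1) *: E 0 + (n%:R * (q 1 1 2)^-1) *: E 2
               + (n%:R * (q 1 1 3)^-1) *: E 3) = F.
  by rewrite !mulmxDr !Mkey // q110_neq0.
have rF : (\rank F <= \rank M)%N by rewrite -MF mxrankM_maxl.
have GE : 1%:M = E 1 + F.
  rewrite -Gsum !big_ord_recl big_ord0 /= /F addr0 addrCA; congr (_ + _).
  by rewrite addrA.
have rn : (n <= m1 + \rank M)%N.
  rewrite -[X in (X <= _)%N](mxrank1 R n) GE -m1E.
  by apply: leq_trans (rank_addmx _ _) _; rewrite leq_add2l.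
have hr := @hadamard_rank _ _ (E 1); rewrite m1E -/M in hr.
nia.
Qed.

End Main.

Theorem lemma13 (R : realType) (n : nat) (adj : rel 'I_n)
    (theta : nat -> R) (E : nat -> 'M[R]_n) (q : nat -> nat -> nat -> R) :
  symmetric adj -> irreflexive adj ->
  distance_regular adj -> diameter_is adj 3 ->
  (* the distinct eigenvalues are theta 0 = k > theta 1 > theta 2 > theta 3 *)
  (forall i j, (i < j)%N -> (j < 4)%N -> theta j < theta i) ->
  (forall a, eigenvalue (adjmx R adj) a <-> exists2 i, (i < 4)%N & a = theta i) ->
  (* E i is the orthogonal projection onto the eigenspace of theta i *)
  (forall i, (i < 4)%N -> is_orth_proj (adjmx R adj) (theta i) (E i)) ->
  (* q i j h = q^h_{ij} are the Krein parameters *)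
  (forall i j, (i < 4)%N -> (j < 4)%N ->
     hadamard (E i) (E j) = n%:R^-1 *: \sum_(h < 4) q i j h *: E h) ->
  (* n >= (m1+2)(m1+1)/2, m1 = multiplicity of theta 1 *)
  ((\rank (eigenspace (adjmx R adj) (theta 1%N)) + 2) *
   (\rank (eigenspace (adjmx R adj) (theta 1%N)) + 1) <= 2 * n)%N ->
  (q 1%N 1%N 2%N = 0 \/ q 1%N 1%N 3%N = 0) /\ Q_polynomial_wrt1 3 q.
Proof.
move=> adj_sym adj_irr drg _ th_dec ev proj krein hm.
have n_gt0 : (0 < n)%N by nia.
have main : q 1 1 2 = 0 \/ q 1 1 3 = 0 by exact: (main_sec _ _ _ _ _ _ adj_sym adj_irr drg th_dec ev proj krein n_gt0 hm).
have f102 : q 1 0 2 = 0 by exact: (q10h _ _ _ _ _ _ adj_sym adj_irr drg th_dec ev proj krein n_gt0 2 isT isT).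
have f103 : q 1 0 3 = 0 by exact: (q10h _ _ _ _ _ _ adj_sym adj_irr drg th_dec ev proj krein n_gt0 3 isT isT).
have f120 : q 1 2 0 = 0 by exact: (q1j0 _ _ _ _ _ _ adj_sym adj_irr drg th_dec ev proj krein n_gt0 2 isT isT).
have f130 : q 1 3 0 = 0 by exact: (q1j0 _ _ _ _ _ _ adj_sym adj_irr drg th_dec ev proj krein n_gt0 3 isT isT).
split => //.
case: main => [f112|f113].
  have f121 : q 1 2 1 = 0 by exact: (q1h1 _ _ _ _ _ _ adj_sym th_dec ev proj krein n_gt0 2 isT f112).
  exists (fun x => if x == 2%N then 3%N else if x == 3%N then 2%N else x); split => //.
  by move=> [|[|[|[|j]]]] [|[|[|[|h]]]] //= _ _ [].
have f131 : q 1 3 1 = 0 by exact: (q1h1 _ _ _ _ _ _ adj_sym th_dec ev proj krein n_gt0 3 isT f113).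
exists id; split => //.
by move=> [|[|[|[|j]]]] [|[|[|[|h]]]] //= _ _ [].
Qed.
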